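(* Let $S\subset\mathbb{R}^d$ be a nonempty compact convex set with diameter $D:=\sup_{x,y\in S}\|x-y\|$, and let $f$ be differentiable on $S$ with $L$-Lipschitz gradient on $S$ (not necessarily convex). Let $G:=\sup_{x\in S}\|\nabla f(x)\|<\infty$, fix $C\ge\max\{LD^2,\,GD\}$ with $C>0$, and let $f^*:=\inf_{x\in S}f(x)$. Let $\delta\ge0$ and suppose that for every $x\in S$ a vector $g_\delta(x)\in\mathbb{R}^d$ is available with \[ \big|\langle \nabla f(x)-g_\delta(x),\,s-x\rangle\big|\le\delta\,\|\nabla f(x)\|\quad\text{for all } s\in S. \] Let $\mathcal G(x):=\max_{s\in S}\langle\nabla f(x),\,x-s\rangle$ (the Frank–Wolfe gap) and $\tilde{\mathcal G}(x):=\max_{s\in S}\langle g_\delta(x),\,x-s\rangle$. Given $x^0\in S$, define iterates for $k=0,1,2,\dots$ by choosing $s^k\in\arg\min_{s\in S}\langle g_\delta(x^k),\,s-x^k\rangle$, setting \[ \overline\alpha_k:=\frac{\big(\tilde{\mathcal G}(x^k)-\delta\|\nabla f(x^k)\|\big)_+}{C},\qquad x^{k+1}:=x^k+\overline\alpha_k(s^k-x^k), \] where $(u)_+:=\max\{u,0\}$. Then for every $K\ge0$, \[ \min_{0\le k\le K}\big(\mathcal G(x^k)-2\delta\|\nabla f(x^k)\|\big)_+\le\sqrt{\frac{2C\,(f(x^0)-f^* )}{K+1}}. \]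
   Context: $\|\cdot\|$ is the Euclidean norm and $\langle\cdot,\cdot\rangle$ the Euclidean inner product. *)

(* Defs.v *)
From HB Require Import structures.
From mathcomp Require Import all_boot all_order all_algebra.
From mathcomp Require Import all_classical all_reals all_analysis.
Set Implicit Arguments. Unset Strict Implicit. Unset Printing Implicit Defensive.
Import Order.TTheory GRing.Theory Num.Theory.
Import numFieldNormedType.Exports.
Local Open Scope classical_set_scope.
Local Open Scope ring_scope.

Definition dotp (R : realType) (d : nat) (u v : 'rV[R]_d) : R :=
  \sum_(i < d) u ord0 i * v ord0 i.

Definition enorm (R : realType) (d : nat) (u : 'rV[R]_d) : R :=
  Num.sqrt (dotp u u).

Definition grad (R : realType) (d : nat) (f : 'rV[R]_d -> R) (x : 'rV[R]_d)
  : 'rV[R]_d := \row_(i < d) ('D_(delta_mx ord0 i) f x).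

Definition posp (R : realType) (u : R) : R := Num.max u 0.

Definition diam (R : realType) (d : nat) (S : set 'rV[R]_d) : R :=
  sup [set enorm (x - y) | x in S & y in S].

Definition fw_gap (R : realType) (d : nat) (S : set 'rV[R]_d)
  (g : 'rV[R]_d -> 'rV[R]_d) (x : 'rV[R]_d) : R :=
  sup [set dotp (g x) (x - s) | s in S].

(* Main.v *)
Require Import Defs.
From HB Require Import structures.
From mathcomp Require Import all_boot all_order all_algebra.
From mathcomp Require Import all_classical all_reals all_analysis.
From mathcomp Require Import ring lra.
Import Order.TTheory GRing.Theory Num.Theory.
Import numFieldNormedType.Exports.
Local Open Scope classical_set_scope.
Local Open Scope ring_scope.
Set Implicit Arguments. Unset Strict Implicit.

Section Aux.
Variables (R : realType) (d : nat).
Implicit Types (u v w : 'rV[R]_d).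

Lemma dotpC u v : dotp u v = dotp v u.
Proof. by apply: eq_bigr => i _; rewrite mulrC. Qed.

Lemma dotpDl u v w : dotp (u + v) w = dotp u w + dotp v w.
Proof. by rewrite /dotp -big_split; apply: eq_bigr => i _; rewrite mxE mulrDl. Qed.

Lemma dotpZl a u w : dotp (a *: u) w = a * dotp u w.
Proof. by rewrite /dotp mulr_sumr; apply: eq_bigr => i _; rewrite mxE mulrA. Qed.

Lemma dotpNl u w : dotp (- u) w = - dotp u w.
Proof. by rewrite -scaleN1r dotpZl mulN1r. Qed.

Lemma dotpBl u v w : dotp (u - v) w = dotp u w - dotp v w.
Proof. by rewrite dotpDl dotpNl. Qed.

Lemma dotpDr u v w : dotp w (u + v) = dotp w u + dotp w v.
Proof. by rewrite dotpC dotpDl !(dotpC w). Qed.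

Lemma dotpZr a u w : dotp w (a *: u) = a * dotp w u.
Proof. by rewrite dotpC dotpZl dotpC. Qed.

Lemma dotpNr u w : dotp w (- u) = - dotp w u.
Proof. by rewrite dotpC dotpNl dotpC. Qed.

Lemma dotpBr u v w : dotp w (u - v) = dotp w u - dotp w v.
Proof. by rewrite dotpDr dotpNr. Qed.

Lemma dotp_ge0 u : 0 <= dotp u u.
Proof. by apply: sumr_ge0 => i _; rewrite -expr2 sqr_ge0. Qed.

Lemma dotp0 u : dotp u u = 0 -> u = 0.
Proof.
move=> /eqP; rewrite psumr_eq0; last by move=> i _; rewrite -expr2 sqr_ge0.
move=> /allP H; apply/rowP => i; rewrite mxE.
by have := H i (mem_index_enum _); rewrite -expr2 sqrf_eq0 => /eqP.
Qed.

Lemma dotp0r u : dotp u 0 = 0.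
Proof. by rewrite /dotp big1 // => i _; rewrite mxE mulr0. Qed.

Lemma CS u v : dotp u v ^+ 2 <= dotp u u * dotp v v.
Proof.
have [v0|vn0] := eqVneq (dotp v v) 0.
  by rewrite v0 (dotp0 v0) dotp0r expr0n /= mulr0.
have vp : 0 < dotp v v by rewrite lt_def vn0 dotp_ge0.
have := dotp_ge0 (dotp v v *: u - dotp u v *: v).
rewrite !(dotpBl, dotpBr, dotpZl, dotpZr) (dotpC v u).
set a := dotp v v; set b := dotp u v; set c := dotp u u => H.
move: H; rewrite (mulrC a b) subrr mulr0 subr0 pmulr_rge0 // subr_ge0.
by rewrite expr2 (mulrC c).
Qed.


Lemma enorm_ge0 u : 0 <= enorm u.
Proof. exact: sqrtr_ge0. Qed.

Lemma enorm_sqr u : enorm u ^+ 2 = dotp u u.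
Proof. by rewrite sqr_sqrtr // dotp_ge0. Qed.

Lemma CSn u v : `|dotp u v| <= enorm u * enorm v.
Proof.
rewrite -ler_sqr ?nnegrE ?mulr_ge0 ?enorm_ge0 //.
by rewrite exprMn !enorm_sqr real_normK ?num_real // CS.
Qed.

Lemma CSr u v : dotp u v <= enorm u * enorm v.
Proof. exact: le_trans (ler_norm _) (CSn u v). Qed.

Lemma enormZ a u : enorm (a *: u) = `|a| * enorm u.
Proof.
rewrite /enorm dotpZl dotpZr mulrA sqrtrM; last by rewrite -expr2 sqr_ge0.
by rewrite -expr2 sqrtr_sqr.
Qed.

End Aux.

Section Aux2.
Variables (R : realType) (d : nat).
Implicit Types (u v w y z : 'rV[R]_d) (f : 'rV[R]_d -> R).

Lemma grad_dotp f p w : differentiable f p -> dotp (grad f p) w = 'D_w f p.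
Proof.
move=> df; rewrite deriveE // {2}(row_sum_delta w) linear_sum /dotp.
by apply: eq_bigr => i _; rewrite mxE deriveE // linearZ /= mulrC.
Qed.

Lemma deriv_seg f y w t : differentiable f (y + t *: w) ->
  is_derive t 1 (fun t => f (y + t *: w)) (dotp (grad f (y + t *: w)) w).
Proof.
move=> df.
have E : (fun h : R => h^-1 *: (((fun t => f (y + t *: w)) \o shift t) (h *: 1) - f (y + t *: w)))
  = (fun h => h^-1 *: ((f \o shift (y + t *: w)) (h *: w) - f (y + t *: w))).
  apply/funext => h /=; congr (_ *: (f _ - _)).
  by rewrite /shift /= scaler1 scalerDl addrCA addrA.
split; first by rewrite /derivable E; exact: diff_derivable.
by rewrite grad_dotp // /derive E.
Qed.
End Aux2.

Section Aux3.
Variables (R : realType) (d : nat).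
Implicit Types (u v w y z : 'rV[R]_d) (f : 'rV[R]_d -> R).

Lemma convex_seg (S : set 'rV[R]_d) y z t : convex_set S -> S y -> S z ->
  0 <= t -> t <= 1 -> S (y + t *: (z - y)).
Proof.
move=> cS Sy Sz t0 t1.
have := cS z y (Itv01 t0 t1); rewrite !in_setE => /(_ Sz Sy).
congr S; rewrite /conv /= /unstable.onem scalerBl scale1r scalerBr.
by rewrite addrCA.
Qed.

Lemma descent (S : set 'rV[R]_d) f L y z : convex_set S ->
  (forall p, S p -> differentiable f p) ->
  (forall p q, S p -> S q -> enorm (grad f p - grad f q) <= L * enorm (p - q)) ->
  0 <= L -> S y -> S z ->
  f z <= f y + dotp (grad f y) (z - y) + L / 2 * enorm (z - y) ^+ 2.
Proof.
move=> cS df Lip L0 Sy Sz.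
set w := z - y.
have pS (t : R) : 0 <= t -> t <= 1 -> S (y + t *: w) by exact: convex_seg.
pose phi t := f (y + t *: w).
pose c0 := dotp (grad f y) w.
pose q := L * enorm w ^+ 2.
pose h := phi - c0 \*: (@id R) - (q / 2) \*: ((@id R) * (@id R)).
have dh (t : R) : 0 <= t -> t <= 1 ->
    is_derive t 1 h (dotp (grad f (y + t *: w)) w - c0 - q * t).
  move=> t0 t1.
  have := is_deriveB (is_deriveB (@deriv_seg _ _ f y w t (df _ (pS t t0 t1)))
     (is_deriveZ c0 (is_derive_id t 1)))
     (is_deriveZ (q/2) (is_deriveM (is_derive_id t 1) (is_derive_id t 1))).
  move=> H; apply: is_derive_eq H _.
  have E1 : forall a : R, a%:A = a by move=> a; rewrite /GRing.scale /= mulr1.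
  have E2 : forall a b : R, a *: b = a * b by [].
  by rewrite !E1 E2; congr (_ - _); field.
have ch : {within `[0, 1], continuous h}.
  apply: continuous_in_subspaceT => t.
  rewrite inE /= in_itv /= => /andP[t0 t1].
  have [dv _] := dh t t0 t1.
  by apply: differentiable_continuous; exact/derivable1_diffP.
have dh' : forall t : R, t \in `]0, 1[ ->
    is_derive t 1 h (dotp (grad f (y + t *: w)) w - c0 - q * t).
  by move=> t; rewrite in_itv /= => /andP[t0 t1]; apply: dh; apply: ltW.
have [c] := MVT ltr01 dh' ch.
rewrite in_itv /= => /andP[c0' c1] Hc.
have Hd : dotp (grad f (y + c *: w)) w - c0 - q * c <= 0.
  rewrite /c0 -dotpBl subr_le0.
  apply: (le_trans (CSr _ _)).
  apply: (le_trans (ler_wpM2r (enorm_ge0 _) (Lip _ _ (pS c (ltW c0') (ltW c1)) Sy))).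
  by rewrite addrAC subrr add0r enormZ ger0_norm ?(ltW c0') // /q; lra.
have h1 : h 1 = f z - c0 - q / 2.
  change (f (y + 1 *: w) - c0 * 1 - q / 2 * (1 * 1) = f z - c0 - q / 2).
  by rewrite scale1r /w addrCA subrr addr0 !mulr1.
have h0 : h 0 = f y.
  change (f (y + 0 *: w) - c0 * 0 - q / 2 * (0 * 0) = f y).
  by rewrite scale0r addr0 !mulr0 !subr0.
move: Hc; rewrite h1 h0 subr0 mulr1 /q => Hc.
have : f z - c0 - L * enorm w ^+ 2 / 2 - f y <= 0 by rewrite Hc.
rewrite /c0; lra.
Qed.
End Aux3.

Section Aux4.
Variables (R : realType) (d : nat).
Implicit Types (u v w y z : 'rV[R]_d) (f : 'rV[R]_d -> R).

Lemma posp_ge0 (a : R) : 0 <= posp a.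
Proof. by rewrite /posp le_max lexx orbT. Qed.

Lemma posp_le (a b : R) : a <= b -> posp a <= posp b.
Proof. by move=> ab; rewrite /posp le_max2. Qed.

Lemma posp_ge (a : R) : a <= posp a.
Proof. by rewrite /posp le_max lexx. Qed.

Lemma posp_mul (a : R) : posp a * a = posp a ^+ 2.
Proof. rewrite /posp maxEle; case: ifP => _; by rewrite expr2 // !mul0r.
Qed.

Lemma compact_entries (S : set 'rV[R]_d) : compact S ->
  exists M : R, forall x, S x -> forall i, `|x ord0 i| <= M.
Proof.
move=> /compact_bounded [M [Mreal normAltM]].
exists (M + 1) => v Sv i.
apply: le_trans (normAltM (M + 1) _ v Sv); last by rewrite ltrDl.
have /mapP[j Hj ->] : `|v ord0 i| \in [seq `|v x.1 x.2| | x : 'I_1 * 'I_d].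
  by apply/mapP; exists (ord0, i) => //=; rewrite mem_enum.
by rewrite [leRHS]/Num.norm /= mx_normrE; apply/bigmax_geP; right => /=; exists j.
Qed.

Lemma diam_bound (S : set 'rV[R]_d) : compact S ->
  forall a b, S a -> S b -> enorm (a - b) <= diam S.
Proof.
move=> /compact_entries [M HM] a b Sa Sb.
apply: ub_le_sup; last by exists a => //; exists b.
exists (Num.sqrt (\sum_(i < d) (2 * M) ^+ 2)) => _ [p Sp [q Sq <-]].
rewrite /enorm ler_sqrt; last by apply: sumr_ge0 => i _; rewrite sqr_ge0.
apply: ler_sum => i _; rewrite mxE -expr2.
have := HM p Sp i; have := HM q Sq i.
rewrite !mxE !ler_norml => /andP[? ?] /andP[? ?].
nra.
Qed.

Lemma f_lbound (S : set 'rV[R]_d) f : compact S ->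
  (forall y, S y -> differentiable f y) -> has_lbound [set f y | y in S].
Proof.
move=> cS df.
have cf : {within S, continuous f}.
  apply: continuous_in_subspaceT => y; rewrite inE => Sy.
  exact: differentiable_continuous (df _ Sy).
have /compact_bounded [M [Mreal HM]] := continuous_compact cf cS.
exists (- (M + 1)) => _ [y Sy <-].
have := HM (M + 1) ltac:(by rewrite ltrDl) (f y) (ex_intro2 _ _ y Sy erefl).
by rewrite /= ler_norml => /andP[].
Qed.
End Aux4.

Unset Implicit Arguments. Set Strict Implicit.

Theorem theorem3 (R : realType) (d : nat) (S : set 'rV[R]_d)
  (f : 'rV[R]_d -> R) (L C delta : R)
  (gdelta : 'rV[R]_d -> 'rV[R]_d) (x s : nat -> 'rV[R]_d) :
  S !=set0 -> compact S -> convex_set S ->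
  (forall y, S y -> differentiable f y) ->
  0 <= L ->
  (forall y z, S y -> S z -> enorm (grad f y - grad f z) <= L * enorm (y - z)) ->
  has_ubound [set enorm (grad f y) | y in S] ->
  let D := diam S in
  let G := sup [set enorm (grad f y) | y in S] in
  let fstar := inf [set f y | y in S] in
  0 < C -> Num.max (L * D ^+ 2) (G * D) <= C ->
  0 <= delta ->
  (forall y, S y -> forall z, S z ->
     `| dotp (grad f y - gdelta y) (z - y) | <= delta * enorm (grad f y)) ->
  S (x 0%N) ->
  (forall k, S (s k) /\
     forall z, S z -> dotp (gdelta (x k)) (s k - x k) <= dotp (gdelta (x k)) (z - x k)) ->
  (forall k, x k.+1 = x k +
     (posp (fw_gap S gdelta (x k) - delta * enorm (grad f (x k))) / C) *: (s k - x k)) ->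
  forall K : nat,
    let v := fun k => posp (fw_gap S (grad f) (x k) - 2 * delta * enorm (grad f (x k))) in
    \big[Num.min/v 0%N]_(k < K.+1) v k
      <= Num.sqrt (2 * C * (f (x 0%N) - fstar) / K.+1%:R).
Proof.
move=> S0 cpt cvx df L0 Lip Gub D G fstar C0 CD d0 gerr x0S sk xk K.
pose v := fun k => posp (fw_gap S (grad f) (x k) - 2 * delta * enorm (grad f (x k))).
change (\big[Num.min/v 0%N]_(k < K.+1) v k <= Num.sqrt (2 * C * (f (x 0%N) - fstar) / K.+1%:R)).
have hDb : forall a b, S a -> S b -> enorm (a - b) <= D := diam_bound cpt.
have hGb : forall y, S y -> enorm (grad f y) <= G.
  by move=> y Sy; apply: ub_le_sup Gub _ _; exists y.
have [p Sp] := S0.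
have D0 : 0 <= D by apply: le_trans (hDb p p Sp Sp); apply: enorm_ge0.
have G0 : 0 <= G by apply: le_trans (hGb p Sp); apply: enorm_ge0.
have fl : forall y, S y -> fstar <= f y.
  by move=> y Sy; apply: ge_inf (f_lbound cpt df) _ _; exists y.
move: CD; rewrite ge_max => /andP[LDC GDC].
pose a k := posp (fw_gap S gdelta (x k) - delta * enorm (grad f (x k))).
have step : forall k, S (x k) ->
    [/\ S (x k.+1), a k ^+ 2 <= 2 * C * (f (x k) - f (x k.+1)) & v k <= a k].
  move=> k Sx; have [Ss Hs] := sk k.
  set g := grad f (x k); set gt := gdelta (x k).
  have ub : forall s', S s' -> dotp gt (x k - s') <= dotp gt (x k - s k).
    move=> s' Ss'; have := Hs s' Ss'.
    by rewrite -(opprB (x k) (s k)) -(opprB (x k) s') !dotpNr lerN2.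
  have gapE : fw_gap S gdelta (x k) = dotp gt (x k - s k).
    apply/le_anti/andP; split.
      apply: ge_sup; first by exists (dotp gt (x k - s k)); exists (s k).
      by move=> _ [s' Ss' <-]; apply: ub.
    apply: ub_le_sup; last by exists (s k).
    by exists (dotp gt (x k - s k)) => _ [s' Ss' <-]; apply: ub.
  have err : forall z, S z -> dotp g (z - x k) <= dotp gt (z - x k) + delta * enorm g
                           /\ dotp gt (z - x k) <= dotp g (z - x k) + delta * enorm g.
    move=> z Sz; have := gerr _ Sx _ Sz; rewrite -/g -/gt dotpBl ler_norml => /andP[h1 h2].
    split; lra.
  set w := s k - x k.
  have gapE' : fw_gap S gdelta (x k) = - dotp gt w by rewrite gapE -opprB dotpNr.
  set u := fw_gap S gdelta (x k) - delta * enorm g.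
  have -> : a k = posp u by [].
  have [e1 e2] := err _ Ss.
  have Ew : enorm w <= D by exact: hDb.
  have cs : - dotp g w <= G * D.
    rewrite -dotpNr opprB; apply: le_trans (CSr _ _) _.
    by apply: ler_pM; [exact: enorm_ge0 | exact: enorm_ge0 | exact: hGb | exact: hDb].
  have hu : u <= C by rewrite /u gapE'; lra.
  have a0 := posp_ge0 u.
  have aC : posp u <= C by rewrite /posp ge_max hu ltW.
  set al := posp u / C.
  have al0 : 0 <= al by rewrite divr_ge0 // ltW.
  have al1 : al <= 1 by rewrite ler_pdivrMr // mul1r.
  have xE : x k.+1 = x k + al *: w by rewrite xk.
  have Sx1 : S (x k.+1) by rewrite xE; exact: convex_seg.
  split => //.
  - have := descent cvx df Lip L0 Sx Sx1.
    rewrite -/g xE (addrC (x k)) addrK dotpZr enormZ ger0_norm //.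
    have Ew0 := enorm_ge0 w.
    have hLE : L * enorm w ^+ 2 <= C.
      apply: le_trans _ LDC; idtac.
      apply: ler_pM => //; first exact: sqr_ge0.
      by rewrite ler_sqr ?nnegrE.
    have hau : al * u = al ^+ 2 * C.
      rewrite /al mulrAC posp_mul; field; exact: lt0r_neq0.
    have hA : posp u = al * C by rewrite /al divfK // lt0r_neq0.
    rewrite hA => hf; rewrite [al *: w + x k]addrC -xE in hf *.
    have h1 : al * dotp g w <= - (al * u).
      rewrite -mulrN -subr_ge0 -mulrBr; apply: mulr_ge0 => //.
      rewrite subr_ge0 /u gapE'; lra.
    have h2 : al ^+ 2 * (L * enorm w ^+ 2) <= al ^+ 2 * C.
      by rewrite -subr_ge0 -mulrBr; apply: mulr_ge0; rewrite ?sqr_ge0 ?subr_ge0.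
    have hX : al ^+ 2 * C / 2 <= f (x k) - f (x k.+1).
      move: hf h1 h2; rewrite hau; set A := al ^+ 2 * C; rewrite exprMn.
      set B := al ^+ 2 * (L * enorm w ^+ 2). have -> : L / 2 * (al ^+ 2 * enorm w ^+ 2) = B / 2.
        by rewrite /B; field.
      lra.
    have : C * (al ^+ 2 * C / 2) <= C * (f (x k) - f (x k.+1)).
      by rewrite -subr_ge0 -mulrBr; apply: mulr_ge0; rewrite ?subr_ge0 // ltW.
    nra.
  - rewrite /v; apply: posp_le.
    suff : fw_gap S (grad f) (x k) <= fw_gap S gdelta (x k) + delta * enorm g.
      rewrite /u -/g; lra.
    apply: ge_sup; first by exists (dotp g (x k - s k)); exists (s k).
    move=> _ [s' Ss' <-]; have [h1 h2] := err _ Ss'.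
    have := ub _ Ss'.
    rewrite -(opprB s' (x k)) !dotpNr gapE.
    lra.
have xS : forall k, S (x k) by elim=> // k IH; have [] := step k IH.
have hsum : forall n, \sum_(k < n) a k ^+ 2 <= 2 * C * (f (x 0%N) - f (x n)).
  elim=> [|n IH]; first by rewrite big_ord0 subrr mulr0.
  rewrite big_ord_recr /=; have [_ h _] := step n (xS n).
  nra.
set m := \big[Num.min/v 0%N]_(k < K.+1) v k.
have vge0 : forall k, 0 <= v k by move=> k; exact: posp_ge0.
have m0 : 0 <= m.
  by rewrite /m; elim/big_ind: _ => // b c hb hc; rewrite le_min hb hc.
have mle : forall j : 'I_K.+1, m <= v j.
  by move=> j; rewrite /m (bigD1 j) //= ge_min lexx.
have hs : K.+1%:R * m ^+ 2 <= \sum_(k < K.+1) a k ^+ 2.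
  have : \sum_(k < K.+1) m ^+ 2 <= \sum_(k < K.+1) a k ^+ 2.
    apply: ler_sum => j _; have [_ _ hv] := step j (xS j).
    rewrite !expr2; apply: ler_pM => //; exact: le_trans (mle j) hv.
  by rewrite sumr_const card_ord mulr_natl.
have hf := fl _ (xS K.+1).
have hf0 := fl _ (xS 0%N).
have key : K.+1%:R * m ^+ 2 <= 2 * C * (f (x 0%N) - fstar).
  apply: le_trans hs _; apply: le_trans (hsum _) _.
  by rewrite -subr_ge0 -mulrBr; apply: mulr_ge0; rewrite ?subr_ge0; lra.
rewrite -(ger0_norm m0) -sqrtr_sqr ler_sqrt; last first.
  by apply: divr_ge0; [apply: mulr_ge0; lra | exact: ler0n].
by rewrite ler_pdivlMr ?ltr0Sn // mulrC.
Qed.
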